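(* Let $n\ge 2$. Every $n$-dimensional non-nilpotent cyclic Leibniz algebra over $\mathbb{C}$ is of type $k$ for one and only one $k\in\{2,\ldots,n\}$.
   Context: A (left) Leibniz algebra is a vector space with a bilinear product such that $x(yz)=(xy)z+y(xz)$ for all $x,y,z$. A cyclic Leibniz algebra is a Leibniz algebra generated by a single element. For an element $x$ set $x^1=x$ and $x^{j+1}=x\,x^j$. In an $n$-dimensional cyclic Leibniz algebra, a generator is an element $x$ such that $\{x,\ldots,x^n\}$ is a basis; for a generator $a$ one always has $aa^n=\alpha_2a^2+\cdots+\alpha_na^n$ for some scalars (no $a$-term). The algebra is called non-nilpotent if a generator $a$ satisfies $aa^n\neq 0$, i.e. $aa^n=\alpha_ka^k+\alpha_{k+1}a^{k+1}+\cdots+\alpha_na^n$ with $2\le k\le n$ and $\alpha_k\neq0$. An $n$-dimensional non-nilpotent cyclic Leibniz algebra is said to be of type $k$ if it has a generator $x$ with $$xx^n=x^k+\gamma_{k+1}x^{k+1}+\cdots+\gamma_nx^n$$ for some $(\gamma_{k+1},\ldots,\gamma_n)\in\mathbb{C}^{n-k}$. *)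

(* Defs.v *)
From HB Require Import structures.
From mathcomp Require Import all_boot all_order all_algebra.
From mathcomp Require Import complex.
From mathcomp Require Import Rstruct.
From Stdlib Require Rdefinitions.
Set Implicit Arguments. Unset Strict Implicit. Unset Printing Implicit Defensive.
Import Order.TTheory GRing.Theory Num.Theory.
Local Open Scope ring_scope.

Definition CC : fieldType := (Rdefinitions.R)[i].

Section Leibniz.
Variable V : vectType CC.
Variable mul : V -> V -> V.

Definition bilinear_prod : Prop :=
  (forall (a : CC) (x y z : V), mul (a *: x + y) z = a *: mul x z + mul y z) /\
  (forall (a : CC) (x y z : V), mul x (a *: y + z) = a *: mul x y + mul x z).

Definition leibniz_identity : Prop :=
  forall x y z : V, mul x (mul y z) = mul (mul x y) z + mul y (mul x z).

Definition is_leibniz_algebra : Prop := bilinear_prod /\ leibniz_identity.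

Definition mul_closed (U : {vspace V}) : Prop :=
  forall x y : V, x \in U -> y \in U -> mul x y \in U.

Definition is_cyclic : Prop :=
  exists a : V, forall U : {vspace V}, mul_closed U -> a \in U -> U = fullv.

(* x^1 = x, x^(j+1) = x x^j   (lpow x j is x^j for j >= 1) *)
Definition lpow (x : V) (j : nat) : V := iter j.-1 (mul x) x.

Definition is_generator (n : nat) (x : V) : Prop :=
  basis_of fullv [seq lpow x j | j <- iota 1 n].

Definition non_nilpotent (n : nat) : Prop :=
  exists a : V, is_generator n a /\ mul a (lpow a n) != 0.

Definition of_type (n k : nat) : Prop :=
  exists x : V, is_generator n x /\
    exists gamma : nat -> CC,
      mul x (lpow x n) = lpow x k + \sum_(k.+1 <= i < n.+1) gamma i *: lpow x i.

End Leibniz.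

(* Main.v *)
Require Import Defs.
From HB Require Import structures.
From mathcomp Require Import all_boot all_order all_algebra complex.
From mathcomp Require Import Rstruct.
From mathcomp Require Import zify ring.
Set Implicit Arguments. Unset Strict Implicit. Unset Printing Implicit Defensive.
Import Order.TTheory GRing.Theory Num.Theory.
Local Open Scope ring_scope.

Lemma rt (m : nat) (z : CC) : (0 < m)%N -> exists c : CC, c ^+ m = z.
Proof. move=> hm. exists (m.-root (z : (Rdefinitions.R)[i])). exact: rootCK. Qed.

Lemma span_sum (V : vectType CC) (g : nat -> V) m l w :
  w \in <<[seq g i | i <- iota m l]>>%VS ->
  exists gam : nat -> CC, w = \sum_(m <= i < m + l) gam i *: g i.
Proof.
elim: l m w => [|l IH] m w.
  rewrite span_nil memv0 => /eqP ->; exists (fun _ => 0).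
  by rewrite addn0 big_geq.
rewrite /= span_cons => /memv_addP [u /vlineP [b ->] [v /IH [gam ->] ->]].
exists (fun i => if i == m then b else gam i).
rewrite (@big_ltn _ _ _ m) ?eqxx; last by lia.
congr (_ + _); rewrite addSnnS; apply: eq_big_nat => i /andP [hi _].
by rewrite ifN //; apply/eqP; lia.
Qed.

Lemma sum_span (V : vectType CC) (g : nat -> V) m l (gam : nat -> CC) :
  \sum_(m <= i < m + l) gam i *: g i \in <<[seq g i | i <- iota m l]>>%VS.
Proof.
rewrite big_nat; apply: memv_suml => i hi; apply/memvZ/memv_span/map_f.
by rewrite mem_iota.
Qed.
Section S.
Variable (V : vectType CC) (mul : V -> V -> V).
Hypothesis hb : bilinear_prod mul.
Hypothesis hl : leibniz_identity mul.

Lemma mul0l z : mul 0 z = 0.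
Proof. have := hb.1 1 0 0 z; rewrite scaler0 addr0 scale1r => h. by apply/(addrI (mul 0 z)); rewrite addr0 -h. Qed.
Lemma mul0r z : mul z 0 = 0.
Proof. have := hb.2 1 z 0 0; rewrite scaler0 addr0 scale1r => h. by apply/(addrI (mul z 0)); rewrite addr0 -h. Qed.
Lemma mulDl x y z : mul (x + y) z = mul x z + mul y z.
Proof. by have := hb.1 1 x y z; rewrite !scale1r. Qed.
Lemma mulDr x y z : mul z (x + y) = mul z x + mul z y.
Proof. by have := hb.2 1 z x y; rewrite !scale1r. Qed.
Lemma mulZl a x z : mul (a *: x) z = a *: mul x z.
Proof. by have := hb.1 a x 0 z; rewrite addr0 mul0l addr0. Qed.
Lemma mulZr a x z : mul z (a *: x) = a *: mul z x.
Proof. by have := hb.2 a z x 0; rewrite addr0 mul0r addr0. Qed.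
Lemma mul_suml (I : Type) (r : seq I) (P : pred I) (F : I -> V) z :
  mul (\sum_(i <- r | P i) F i) z = \sum_(i <- r | P i) mul (F i) z.
Proof. exact: (big_morph (fun v => mul v z) (fun x y => mulDl x y z) (mul0l z)). Qed.
Lemma mul_sumr (I : Type) (r : seq I) (P : pred I) (F : I -> V) z :
  mul z (\sum_(i <- r | P i) F i) = \sum_(i <- r | P i) mul z (F i).
Proof. exact: (big_morph (fun v => mul z v) (fun x y => mulDr x y z) (mul0r z)). Qed.

Lemma lpowSS x j : lpow mul x j.+2 = mul x (lpow mul x j.+1).
Proof. by []. Qed.

Lemma lpow_ann x j z : (2 <= j)%N -> mul (lpow mul x j) z = 0.
Proof.
case: j => // [][]// j _; elim: j z => [|j IH] z.
  have := hl x x z; rewrite /lpow /= => h.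
  by apply/(addIr (mul x (mul x z))); rewrite add0r -h.
rewrite lpowSS; have := hl x (lpow mul x j.+2) z.
by rewrite !IH mul0r addr0 => ->.
Qed.

Definition Sp x (j n : nat) : {vspace V} :=
  <<[seq lpow mul x i | i <- iota j (n.+1 - j)]>>%VS.

Lemma Sp_ann x n w z : w \in Sp x 2 n -> mul w z = 0.
Proof.
move=> /span_sum [gam ->]; rewrite mul_suml big_nat big1 // => i /andP [hi _].
by rewrite mulZl lpow_ann // scaler0.
Qed.

Lemma lpowZ (c : CC) (x : V) (j : nat) : lpow mul (c *: x) j.+1 = c ^+ j.+1 *: lpow mul x j.+1.
Proof.
elim: j => [|j IH].
  by rewrite /lpow /= expr1.
by rewrite lpowSS IH mulZl mulZr scalerA -exprS.
Qed.

End S.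
Section T.
Variable (V : vectType CC) (mul : V -> V -> V).
Hypothesis hb : bilinear_prod mul.
Hypothesis hl : leibniz_identity mul.
Variable n : nat.
Hypothesis hn : (2 <= n)%N.

Lemma mulNr x z : mul z (- x) = - mul z x.
Proof. by rewrite -scaleN1r mulZr // scaleN1r. Qed.
Lemma mulBr x y z : mul z (x - y) = mul z x - mul z y.
Proof. by rewrite mulDr // mulNr. Qed.

Lemma mem_Sp x m i : (m <= i <= n)%N -> lpow mul x i \in Sp mul x m n.
Proof. move=> h; apply/memv_span/map_f; rewrite mem_iota; lia. Qed.

Lemma sum_Sp x m m' (g : nat -> CC) : (m <= m')%N ->
  \sum_(m' <= i < n.+1) g i *: lpow mul x i \in Sp mul x m n.
Proof. move=> h; rewrite big_nat; apply: memv_suml => i hi; apply/memvZ/mem_Sp; lia. Qed.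

Lemma Sp_sum x m v : (m <= n.+1)%N -> v \in Sp mul x m n ->
  exists g : nat -> CC, v = \sum_(m <= i < n.+1) g i *: lpow mul x i.
Proof. by move=> h /span_sum; rewrite subnKC. Qed.

Lemma Sp1 x : is_generator mul n x -> Sp mul x 1 n = fullv.
Proof. by case/andP => /eqP <- _; rewrite /Sp subSS subn0. Qed.

Lemma Sp_cons x m : (m <= n)%N ->
  Sp mul x m n = (<[lpow mul x m]> + Sp mul x m.+1 n)%VS.
Proof.
move=> h; rewrite /Sp -span_cons subSS.
by have -> : (n.+1 - m = (n - m).+1)%N by lia.
Qed.

Lemma dim_Sp x m : is_generator mul n x -> (1 <= m <= n.+1)%N ->
  \dim (Sp mul x m n) = (n.+1 - m)%N.
Proof.
case/andP => _ hf hm.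
have e : iota 1 n = iota 1 m.-1 ++ iota m (n.+1 - m).
  have -> : m = (1 + m.-1)%N by lia.
  by rewrite -iotaD; congr iota; lia.
move: hf; rewrite e map_cat => /catr_free /eqP.
by rewrite size_map size_iota.
Qed.

Lemma gen_decomp x y : is_generator mul n x -> is_generator mul n y ->
  exists2 a : CC, a != 0 & forall z, mul y z = a *: mul x z.
Proof.
move=> gx gy.
have : y \in Sp mul x 1 n by rewrite Sp1 ?memvf.
rewrite Sp_cons; last by lia.
move=> /memv_addP [u /vlineP [a ->] [i hi ey]]; subst y.
have hm : forall z, mul (a *: x + i) z = a *: mul x z.
  by move=> z; rewrite mulDl // mulZl // (Sp_ann hb hl z hi) addr0.
exists a => //; apply/eqP => a0.
move: gy => /andP [_ hf].
have : lpow mul (a *: x + i) 2 \in [seq lpow mul (a *: x + i) j | j <- iota 1 n].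
  by apply: map_f; rewrite mem_iota; lia.
move=> hmem; have := free_not0 hf hmem.
by rewrite /lpow /= hm a0 scale0r eqxx.
Qed.

End T.
Section U.
Variable (V : vectType CC) (mul : V -> V -> V).
Hypothesis hb : bilinear_prod mul.
Hypothesis hl : leibniz_identity mul.
Variable n : nat.
Hypothesis hn : (2 <= n)%N.
Variables (x : V) (k : nat) (gam : nat -> CC).
Hypothesis gx : is_generator mul n x.
Hypothesis hk : (2 <= k <= n)%N.
Hypothesis H : mul x (lpow mul x n) =
  lpow mul x k + \sum_(k.+1 <= i < n.+1) gam i *: lpow mul x i.

Lemma mul_lpow i : (1 <= i)%N -> mul x (lpow mul x i) = lpow mul x i.+1.
Proof. by case: i. Qed.

Lemma step j u : (1 <= j <= k)%N -> u \in Sp mul x j n ->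
  mul x u \in Sp mul x (minn j.+1 k) n.
Proof.
move=> hj hu; have hle : (j <= n.+1)%N by lia.
have [g ->] := Sp_sum hle hu.
rewrite (mul_sumr hb) big_nat; apply: memv_suml => i hi.
rewrite mulZr //; apply: memvZ.
have [ein|ltin] := eqVneq i n.
  rewrite ein H; apply: memvD; first by apply: mem_Sp; lia.
  by apply: sum_Sp; lia.
rewrite mul_lpow; last by lia.
by apply: mem_Sp; lia.
Qed.

Lemma U1 t w : iter t (mul x) w \in Sp mul x (minn t.+1 k) n.
Proof.
elim: t => [|t IH] /=.
  have -> : minn 1 k = 1%N by lia.
  by rewrite Sp1 // memvf.
have := step _ IH; rewrite (_ : minn (minn t.+1 k).+1 k = minn t.+2 k); last by lia.
by apply; lia.
Qed.

Lemma U2 v : v \in Sp mul x k n -> exists2 u, u \in Sp mul x k n & v = mul x u.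
Proof.
move=> hv; have hle : (k <= n.+1)%N by lia.
have [g ->] := Sp_sum hle hv.
pose p := lpow mul x n - \sum_(k.+1 <= i < n.+1) gam i *: lpow mul x i.-1.
pose pre i := if i == k then p else lpow mul x i.-1.
exists (\sum_(k <= i < n.+1) g i *: pre i).
  rewrite big_nat; apply: memv_suml => i hi; apply: memvZ; rewrite /pre.
  case: eqP => ne.
    apply: memvB; first by apply: mem_Sp; lia.
    rewrite big_nat; apply: memv_suml => j hj; apply/memvZ/mem_Sp; lia.
  by apply: mem_Sp; lia.
rewrite (mul_sumr hb); apply: eq_big_nat => i hi; rewrite mulZr //; congr (_ *: _).
rewrite /pre; case: eqP => [->|ne].
  rewrite /p (mulBr hb) H (mul_sumr hb) -addrA.
  rewrite [X in _ + X](_ : _ = 0) ?addr0 //; apply/eqP; rewrite subr_eq0; apply/eqP.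
  apply: eq_big_nat => j hj.
  by rewrite (mulZr hb) mul_lpow; [congr (_ *: lpow _ _ _); lia | lia].
by rewrite mul_lpow; [congr (lpow _ _ _); lia | lia].
Qed.

Lemma U2it t v : v \in Sp mul x k n -> exists w, v = iter t (mul x) w.
Proof.
elim: t v => [|t IH] v hv; first by exists v.
have [u hu ->] := U2 hv; have [w ->] := IH u hu; by exists w.
Qed.

End U.
Lemma uniq_le (V : vectType CC) (mul : V -> V -> V) (hb : bilinear_prod mul)
  (hl : leibniz_identity mul) n (hn : (2 <= n)%N) x y k k' (gx : is_generator mul n x)
  (gy : is_generator mul n y) (hk : (2 <= k <= n)%N) (hk' : (2 <= k' <= n)%N)
  (g g' : nat -> CC)
  (Hx : mul x (lpow mul x n) = lpow mul x k + \sum_(k.+1 <= i < n.+1) g i *: lpow mul x i)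
  (Hy : mul y (lpow mul y n) = lpow mul y k' + \sum_(k'.+1 <= i < n.+1) g' i *: lpow mul y i) :
  (k' <= k)%N.
Proof.
have [a a0 hm] := gen_decomp hb hl hn gx gy.
have it : forall t w, iter t (mul y) w = a ^+ t *: iter t (mul x) w.
  elim=> [|t IH] w /=; first by rewrite scale1r.
  by rewrite IH hm (mulZr hb) scalerA exprS.
have sub : (Sp mul x k n <= Sp mul y k' n)%VS.
  apply/subvP => v hv; have [w ->] := U2it hb hn hk Hx n hv.
  have -> : iter n (mul x) w = (a ^+ n)^-1 *: iter n (mul y) w.
    by rewrite it scalerA mulVf ?scale1r // expf_neq0.
  apply: memvZ; have := U1 hb hn gy hk' Hy n w.
  by rewrite (_ : minn n.+1 k' = k'); last by lia.
have := dimvS sub; rewrite !(dim_Sp hn) //; lia.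
Qed.
Lemma lpowZ' (V : vectType CC) (mul : V -> V -> V) (hb : bilinear_prod mul) c x j :
  (0 < j)%N -> lpow mul (c *: x) j = c ^+ j *: lpow mul x j.
Proof. by case: j => // j _; rewrite lpowZ. Qed.

Lemma exist_type (V : vectType CC) (mul : V -> V -> V) (hb : bilinear_prod mul)
  (hl : leibniz_identity mul) n (hn : (2 <= n)%N) (hdim : \dim (fullv : {vspace V}) = n)
  a (ga : is_generator mul n a) (hv : mul a (lpow mul a n) != 0) :
  exists k, (2 <= k <= n)%N /\ of_type mul n k.
Proof.
set v := mul a (lpow mul a n) in hv *.
have a2 : lpow mul a 2 != 0.
  case/andP: (ga) => _ hf; apply: (free_not0 hf); apply: map_f; rewrite mem_iota; lia.
have v2 : v \in Sp mul a 2 n.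
  have : v \in Sp mul a 1 n by rewrite Sp1 // memvf.
  rewrite (Sp_cons _ hn); last by lia.
  move=> /memv_addP [u /vlineP [c ->] [w hw ev]].
  have e : v = lpow mul a n.+1 by rewrite /v; case: (n) hn.
  have h2 : (2 <= n.+1)%N by lia.
  have := lpow_ann hb hl a a h2; rewrite -e ev (mulDl hb) (mulZl hb).
  rewrite (Sp_ann hb hl a hw) addr0 => /eqP; rewrite scaler_eq0 (negbTE a2) orbF => /eqP c0.
  by rewrite c0 scale0r add0r.
pose P j := (2 <= j <= n)%N && (v \in Sp mul a j n).
have exP : exists j, P j by exists 2%N; rewrite /P v2 andbT; lia.
have ubP : forall j, P j -> (j <= n)%N by move=> j /andP [h _]; lia.
case: (ex_maxnP exP ubP) => k /andP [hk hvk] kmax.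
move: hvk; rewrite (Sp_cons _ hn); last by lia.
move=> /memv_addP [u /vlineP [b ->] [w hw ev]].
have b0 : b != 0.
  apply/eqP => b0; move: ev; rewrite b0 scale0r add0r => ev.
  have [kn|kn] := ltnP k n.
    have : P k.+1 by rewrite /P ev hw andbT; lia.
    by move=> /kmax; lia.
  move: hw; rewrite /Sp (_ : n.+1 - k.+1 = 0)%N; last by lia.
  rewrite /= span_nil memv0 => /eqP w0.
  by move: hv; rewrite ev w0 eqxx.
have hle : (k.+1 <= n.+1)%N by lia.
have [g gw] := Sp_sum hle hw.
have hpos : (0 < n.+1 - k)%N by lia.
have [c hc] := rt (b^-1) hpos.
have c0 : c != 0.
  apply/eqP => c0; move: hc; rewrite c0 expr0n (negbTE (lt0n_neq0 hpos)) /=.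
  by move/esym/eqP; rewrite invr_eq0 (negbTE b0).
exists k; split => //.
exists (c *: a); split.
  rewrite /is_generator basisEdim size_map size_iota hdim leqnn andbT.
  case/andP: (ga) => /eqP <- _; apply/span_subvP => u' /mapP [i hi ->].
  move: hi; rewrite mem_iota => hi.
  have -> : lpow mul a i = (c ^+ i)^-1 *: lpow mul (c *: a) i.
    by rewrite (lpowZ' hb) ?scalerA ?mulVf ?scale1r ?expf_neq0 //; lia.
  by apply/memvZ/memv_span/map_f; rewrite mem_iota.
exists (fun i => c ^+ n.+1 * g i / c ^+ i).
rewrite !(lpowZ' hb) ?(mulZl hb) ?(mulZr hb) -?/v; try lia.
rewrite scalerA -exprS ev gw scalerDr scalerA; congr (_ + _).
  congr (_ *: _); rewrite -(subnKC (_ : k <= n.+1)%N); last by lia.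
  by rewrite exprD -mulrA hc mulVf // mulr1.
rewrite scaler_sumr; apply: eq_big_nat => i hi.
rewrite (lpowZ' hb); last by lia.
by rewrite !scalerA mulfVK // expf_neq0.
Qed.

Theorem lemma3p3 (n : nat) (V : vectType CC) (mul : V -> V -> V) :
  (2 <= n)%N ->
  \dim (fullv : {vspace V}) = n ->
  is_leibniz_algebra mul ->
  is_cyclic mul ->
  non_nilpotent mul n ->
  exists! k : nat, (2 <= k <= n)%N /\ of_type mul n k.
Proof.
move=> hn hdim [hb hl] _ [a [ga hv]].
have [k [hk tk]] := exist_type hb hl hn hdim ga hv.
exists k; split => // k' [hk' [y [gy [g' Hy]]]].
case: tk => x [gx [g Hx]].
apply/eqP; rewrite eqn_leq (uniq_le hb hl hn gx gy hk hk' Hx Hy).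
by rewrite (uniq_le hb hl hn gy gx hk' hk Hy Hx).
Qed.
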